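(* Fix $d\ge2$. There exists $C>0$ such that for all $n\ge1$, $$\mathrm{card}\,\mathrm{Diag}(n)\le C n^{d-1}.$$
   Context: Consider the tessellation of $\mathbb{R}^d$ by the unit cubes $k+[0,1]^d$, $k\in\mathbb{Z}^d$; faces are faces of these cubes. For faces $A,B$ of dimension at most $d-2$, the diagonal $\gamma_{A,B}$ is the set of oriented segments starting in $A$ and ending in $B$ (not meeting other faces of dimension at most $d-2$ in between); $A,B$ are at combinatorial length $n$ if every such segment passes through $n$ cubes, and then $\gamma_{A,B}$ has combinatorial length $n$. $\mathrm{Diag}(n)$ is the set of diagonals of combinatorial length $n$ whose initial segment lies in $[0,1]^d$. *)

(* Defs.v *)
From HB Require Import structures.
From mathcomp Require Import all_boot all_order all_algebra.
From mathcomp Require Import reals.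
Set Implicit Arguments. Unset Strict Implicit. Unset Printing Implicit Defensive.
Import Order.TTheory GRing.Theory Num.Theory.
Local Open Scope ring_scope.

(* Its dimension
   is #|I|.  Every face of every cube k + [0,1]^d is of this form and
   conversely. *)
Definition in_face (R : realType) (d : nat) (I : {set 'I_d}) (k : 'I_d -> int)
  (x : 'I_d -> R) : Prop :=
  forall i, if i \in I then (k i)%:~R <= x i <= (k i)%:~R + 1
            else x i == (k i)%:~R.

Definition in_cube (R : realType) (d : nat) (k : {ffun 'I_d -> int})
  (x : 'I_d -> R) : Prop :=
  forall i, (k i)%:~R <= x i <= (k i)%:~R + 1.

Definition skel (R : realType) (d : nat) (x : 'I_d -> R) : Prop :=
  exists (I : {set 'I_d}) (k : 'I_d -> int), (#|I| <= d - 2)%N /\ in_face I k x.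

Definition segpt (R : realType) (d : nat) (p q : 'I_d -> R) (t : R) : 'I_d -> R :=
  fun i => p i + t * (q i - p i).

Definition seg (R : realType) (d : nat) := (('I_d -> R) * ('I_d -> R))%type.

Definition gamma (R : realType) (d : nat) (IA : {set 'I_d}) (kA : 'I_d -> int)
  (IB : {set 'I_d}) (kB : 'I_d -> int) : seg R d -> Prop :=
  fun s => s.1 <> s.2 /\ in_face IA kA s.1 /\ in_face IB kB s.2 /\
    forall t : R, 0 < t < 1 -> ~ skel (segpt s.1 s.2 t).

Definition passes (R : realType) (d : nat) (p q : 'I_d -> R) (k : {ffun 'I_d -> int})
  : Prop :=
  exists t1 t2 : R, 0 <= t1 /\ t1 < t2 /\ t2 <= 1 /\
    in_cube k (segpt p q t1) /\ in_cube k (segpt p q t2).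

Definition passes_n (R : realType) (d : nat) (p q : 'I_d -> R) (n : nat) : Prop :=
  exists s : seq {ffun 'I_d -> int},
    uniq s /\ size s = n /\ forall k, k \in s <-> passes p q k.

Definition comb_length (R : realType) (d : nat) (IA : {set 'I_d}) (kA : 'I_d -> int)
  (IB : {set 'I_d}) (kB : 'I_d -> int) (n : nat) : Prop :=
  forall s, @gamma R d IA kA IB kB s -> passes_n s.1 s.2 n.

Definition initial_in_unit (R : realType) (d : nat) (p q : 'I_d -> R) : Prop :=
  exists eps : R, 0 < eps /\
    forall t, 0 <= t <= eps -> forall i, 0 <= segpt p q t i <= 1.

Definition Diag (R : realType) (d : nat) (n : nat) (g : seg R d -> Prop) : Prop :=
  exists (IA : {set 'I_d}) (kA : 'I_d -> int) (IB : {set 'I_d}) (kB : 'I_d -> int),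
    (#|IA| <= d - 2)%N /\ (#|IB| <= d - 2)%N /\
    g = @gamma R d IA kA IB kB /\
    (exists s, g s) /\
    @comb_length R d IA kA IB kB n /\
    (forall s, g s -> initial_in_unit s.1 s.2).

(* Main.v *)
Require Import Defs.
From HB Require Import structures.
From mathcomp Require Import all_boot all_order all_algebra.
From mathcomp Require Import reals.
From Stdlib Require List.
From mathcomp Require Import ring lra zify.
From Stdlib Require Import FunctionalExtensionality.
Set Implicit Arguments. Unset Strict Implicit. Unset Printing Implicit Defensive.
Import Order.TTheory GRing.Theory Num.Theory.
Local Open Scope ring_scope.

Lemma seq_argmin (R : realType) (T : eqType) (f : T -> R) (s : seq T) x0 :
  x0 \in s -> exists2 i, i \in s & forall j, j \in s -> f i <= f j.
Proof.
elim: s x0 => [//|y s IH] x0 _.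
case: s IH => [|z s] IH.
  by exists y => [|j]; rewrite ?mem_seq1 ?inE // => /eqP ->.
have [i Hi Hmin] := IH z (mem_head _ _).
case: (leP (f y) (f i)) => h.
  exists y; first exact: mem_head.
  move=> j; rewrite inE => /orP[/eqP -> //|/Hmin]; exact: le_trans.
exists i; first by rewrite inE Hi orbT.
move=> j; rewrite inE => /orP[/eqP -> |/Hmin //]; exact: ltW.
Qed.

Lemma fin_argmin (R : realType) (T : finType) (f : T -> R) (x0 : T) :
  exists i, forall j, f i <= f j.
Proof.
have [i _ H] := seq_argmin f (mem_enum T x0).
by exists i => j; apply: H; rewrite mem_enum.
Qed.

Section Geo.
Variables (R : realType) (d : nat) (p q : 'I_d -> R) (i0 : 'I_d).

Definition dl i := q i - p i.
Definition sg i : bool := 0 <= dl i.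
Definition u i (t : R) : R := if sg i then segpt p q t i else - segpt p q t i.
Definition a i : R := `|dl i|.

Lemma a_ge0 i : 0 <= a i. Proof. exact: normr_ge0. Qed.

Lemma uE i t : u i t = u i 0 + t * a i.
Proof.
rewrite /u /a /segpt /sg /dl; case: ifP => h.
  by rewrite (ger0_norm h); ring.
have h' : q i - p i < 0 by rewrite ltNge h.
by rewrite (ltr0_norm h'); ring.
Qed.

Definition Tc (k : {ffun 'I_d -> int}) i : int := if sg i then k i else - k i - 1.

Lemma in_cubeE k t : in_cube k (segpt p q t) <->
  forall i, (Tc k i)%:~R <= u i t <= (Tc k i)%:~R + 1.
Proof.
rewrite /in_cube /Tc /u; split=> H i; have := H i; case: (sg i) => // /andP[h1 h2];
  apply/andP; rewrite ?intrB ?intrN ?mulr1z in h1 h2 *; split; lra.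
Qed.

Lemma Tc_inj k k' : (forall i, Tc k i = Tc k' i) -> k = k'.
Proof.
move=> H; apply/ffunP => i; have := H i; rewrite /Tc; by case: (sg i) => // /addIr /oppr_inj ->.
Qed.

Definition E t : {ffun 'I_d -> int} :=
  [ffun i => if sg i then Num.floor (u i t) else - Num.floor (u i t) - 1].

Lemma TcE t i : Tc (E t) i = Num.floor (u i t).
Proof. rewrite /Tc ffunE; case: (sg i) => //; lia. Qed.

Definition psi (k : {ffun 'I_d -> int}) : int := \sum_i Tc k i.

Lemma psiE t : psi (E t) = \sum_i Num.floor (u i t).
Proof. by apply: eq_bigr => i _; rewrite TcE. Qed.

Definition tau i t : R :=
  if 0 < a i then t + ((Num.floor (u i t) + 1)%:~R - u i t) / a i else 2.

Lemma tau_gt i t : t < 1 -> t < tau i t.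
Proof.
move=> ht; rewrite /tau; case: ifP => ha; last lra.
have : 0 < ((Num.floor (u i t) + 1)%:~R - u i t) / a i.
  by apply: divr_gt0 => //; rewrite subr_gt0 floorD1_gt.
lra.
Qed.

Lemma u_tau i t : 0 < a i -> u i (tau i t) = (Num.floor (u i t) + 1)%:~R.
Proof.
move=> ha; rewrite /tau ha.
set c := (_ + 1)%:~R.
rewrite uE mulrDl -mulrA mulVf ?mulr1; last by rewrite gt_eqF.
rewrite [u i t]uE; ring.
Qed.

Lemma u_le_tau i t t2 : t <= t2 -> t2 <= tau i t ->
  (Num.floor (u i t))%:~R <= u i t2 <= (Num.floor (u i t) + 1)%:~R.
Proof.
move=> h1 h2; have hf := floor_le (u i t); have hg := floorD1_gt (u i t).
have ha := a_ge0 i; have e1 := uE i t; have e2 := uE i t2.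
have hm : t * a i <= t2 * a i by apply: ler_wpM2r.
apply/andP; split; first lra.
case: (ltP 0 (a i)) => ha'.
  have : t2 * a i <= tau i t * a i by apply: ler_wpM2r.
  have e3 := uE i (tau i t); rewrite (u_tau t ha') in e3.
  rewrite intrD mulr1z in hg e3 *; lra.
have a0 : a i = 0 by apply/eqP; rewrite eq_le ha' ha.
rewrite a0 !mulr0 in e1 e2; lra.
Qed.

Lemma passesE t : 0 <= t < 1 -> passes p q (E t).
Proof.
move=> /andP[h0 h1].
have [im Hm] := fin_argmin (fun i => tau i t) i0.
have htt := tau_gt im h1.
set t2 := Order.min (tau im t) 1.
have h2a : t2 <= tau im t by rewrite /t2 ge_min lexx.
have h2b : t2 <= 1 by rewrite /t2 ge_min lexx orbT.
have h2c : t < t2 by rewrite /t2 lt_min htt h1.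
exists t, t2; split=> //; split=> //; split=> //; split; apply/in_cubeE => i;
  rewrite TcE.
  have := @u_le_tau i t t (lexx _) (ltW (tau_gt i h1)).
  by rewrite intrD mulr1z.
have := @u_le_tau i t t2 (ltW h2c) (le_trans h2a (Hm i)).
by rewrite intrD mulr1z.
Qed.

Hypothesis NoTwoU : forall t, 0 < t < 1 -> forall i j, i != j ->
  forall mi mj : int, u i t = mi%:~R -> u j t = mj%:~R -> False.

Lemma stepE t : 0 <= t < 1 ->
  (exists t', 0 <= t' < 1 /\ psi (E t') = psi (E t) + 1) \/
  psi (E 1) <= psi (E t) + d%:Z.
Proof.
move=> /andP[h0 h1].
have [im Hm] := fin_argmin (fun i => tau i t) i0.
case: (ltP (tau im t) 1) => hlt.
  left.
  have ha : 0 < a im by move: hlt; rewrite /tau; case: ifP => // _; lra.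
  have htt := tau_gt im h1.
  set t' := tau im t in hlt htt *.
  exists t'; split; first by apply/andP; split; lra.
  rewrite !psiE (bigD1 im) //= [in RHS](bigD1 im) //=.
  have -> : Num.floor (u im t') = Num.floor (u im t) + 1.
    by rewrite /t' u_tau // intrKfloor.
  have -> : \sum_(j | j != im) Num.floor (u j t') =
            \sum_(j | j != im) Num.floor (u j t).
    apply: eq_bigr => j hj; apply: floor_def.
    have /andP[l1 l2] := @u_le_tau j t t' (ltW htt) (Hm j).
    rewrite l1 /= lt_neqAle l2 andbT; apply/negP => /eqP e.
    apply: (@NoTwoU t' _ im j _ (Num.floor (u im t) + 1) _ _ e).
    - by apply/andP; split; lra.
    - by rewrite eq_sym.
    - by rewrite /t' u_tau.
  by rewrite addrAC.
right; rewrite !psiE.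
apply: le_trans (_ : \sum_i (Num.floor (u i t) + 1) <= _); last first.
  by rewrite big_split /= sumr_const card_ord natz.
apply: ler_sum => i _.
have /andP[_ l2] := @u_le_tau i t 1 (ltW h1) (le_trans hlt (Hm i)).
by have := le_floor l2; rewrite intrKfloor.
Qed.

Lemma reach (j : nat) : psi (E 0) + j%:Z + d%:Z <= psi (E 1) ->
  exists t, 0 <= t < 1 /\ psi (E t) = psi (E 0) + j%:Z.
Proof.
elim: j => [|j IH] h.
  by exists 0; split; [apply/andP; split; lra | rewrite addr0].
have [|t [ht e]] := IH; first lia.
case: (stepE ht) => [[t' [ht' e']]|hle].
  by exists t'; split => //; rewrite e' e; lia.
lia.
Qed.

Lemma lowerB n : passes_n p q n -> psi (E 1) - psi (E 0) - d%:Z + 1 <= n%:Z.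
Proof.
move=> [s [us [sz Hs]]].
case: (ltP (psi (E 1) - psi (E 0) - d%:Z) 0) => hJ; first lia.
have [Jn eJ] : exists Jn : nat, psi (E 1) - psi (E 0) - d%:Z = Jn%:Z.
  by exists (absz (psi (E 1) - psi (E 0) - d%:Z)%R); rewrite gez0_abs.
rewrite eJ -sz.
set vs := [seq psi (E 0) + j%:Z | j <- iota 0 Jn.+1].
have : (size vs <= size (map psi s))%N.
  apply: uniq_leq_size.
    by rewrite map_inj_uniq ?iota_uniq // => x y /addrI [].
  move=> v /mapP[j hj ->]; rewrite mem_iota add0n in hj.
  have [|t [ht et]] := @reach j; first lia.
  by rewrite -et; apply: map_f; apply/Hs; exact: passesE.
rewrite size_map size_map size_iota => h; lia.
Qed.

Lemma a_le1 i1 (m0 : int) : a i1 = 0 -> u i1 0 = m0%:~R -> forall j, a j <= 1.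
Proof.
move=> ha1 hu1 j; case: (eqVneq j i1) => [->|hj]; first by rewrite ha1 ler01.
case: (leP (a j) 1) => // hgt; exfalso.
set m := Num.floor (u j 0) + 1.
have hf := floor_le (u j 0); have hg := floorD1_gt (u j 0).
have ha : 0 < a j by lra.
set t := (m%:~R - u j 0) / a j.
have ht : t * a j = m%:~R - u j 0.
  by rewrite /t -mulrA mulVf ?mulr1 // gt_eqF.
have hm : m%:~R = (Num.floor (u j 0))%:~R + 1 :> R by rewrite /m intrD mulr1z.
have ht0 : 0 < t by apply: divr_gt0 => //; lra.
have ht1 : t < 1 by rewrite /t ltr_pdivrMr // mul1r; lra.
apply: (@NoTwoU t _ j i1 hj m m0).
- by apply/andP.
- by rewrite uE ht; ring.
- by rewrite uE ha1 mulr0 addr0.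
Qed.

Lemma dpsi_bounds :
  \sum_i a i - d%:R <= (psi (E 1) - psi (E 0))%:~R <= \sum_i a i + d%:R.
Proof.
rewrite !psiE -sumrB mulrz_sumr.
have H i : a i - 1 <= 1 *~ (Num.floor (u i 1) - Num.floor (u i 0)) <= a i + 1.
  rewrite intrB.
  have := floor_le (u i 1); have := floorD1_gt (u i 1).
  have := floor_le (u i 0); have := floorD1_gt (u i 0).
  have e := uE i 1; rewrite mul1r in e.
  rewrite !intrD !mulr1z => *; apply/andP; split; lra.
apply/andP; split.
  rewrite (_ : \sum_i a i - d%:R = \sum_i (a i - 1)); last first.
    by rewrite sumrB sumr_const card_ord.
  by apply: ler_sum => i _; case/andP: (H i).
rewrite (_ : \sum_i a i + d%:R = \sum_i (a i + 1)); last first.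
  by rewrite big_split /= sumr_const card_ord.
by apply: ler_sum => i _; case/andP: (H i).
Qed.

Lemma floor_mono i t t' : t <= t' -> Num.floor (u i t) <= Num.floor (u i t').
Proof.
move=> h; apply: le_floor; rewrite (uE i t) (uE i t') lerD2l.
by apply: ler_wpM2r => //; exact: a_ge0.
Qed.

Lemma E_inj_le t t' : t <= t' -> psi (E t) = psi (E t') -> E t = E t'.
Proof.
move=> h e; apply: Tc_inj => i; rewrite !TcE.
have H : \sum_i (Num.floor (u i t') - Num.floor (u i t)) = 0.
  by rewrite sumrB -!psiE e subrr.
have hpos : forall j, predT j -> 0 <= Num.floor (u j t') - Num.floor (u j t).
  by move=> j _; rewrite subr_ge0 floor_mono.
by have /eqP := @psumr_eq0P _ _ predT _ hpos H i isT; rewrite subr_eq0 => /eqP.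
Qed.

Lemma E_inj t t' : psi (E t) = psi (E t') -> E t = E t'.
Proof.
case: (leP t t') => h e; first exact: E_inj_le.
by apply/esym/E_inj_le => //; apply: ltW.
Qed.

Lemma psi_range t : 0 <= t <= 1 -> psi (E 0) <= psi (E t) <= psi (E 1).
Proof.
move=> /andP[h0 h1]; rewrite !psiE; apply/andP; split; apply: ler_sum => i _;
  exact: floor_mono.
Qed.

Hypothesis NoZ : forall i, a i = 0 -> forall m : int, u i 0 <> m%:~R.

Lemma passed_E k : passes p q k -> exists t, 0 < t < 1 /\ k = E t.
Proof.
move=> [t1 [t2 [h1 [h12 [h2 [c1 c2]]]]]].
move/in_cubeE in c1; move/in_cubeE in c2.
set t := (t1 + t2) / 2.
exists t; split; first by apply/andP; split; rewrite /t; lra.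
apply: Tc_inj => i; rewrite TcE; apply/esym/floor_def.
set m := Tc k i.
have := c1 i; have := c2 i.
have e1 := uE i t1; have e2 := uE i t2; have e := uE i t.
have ha := a_ge0 i.
have et : t * a i = (t1 * a i + t2 * a i) / 2 by rewrite /t; ring.
rewrite intrD mulr1z => /andP[l1 l2] /andP[l3 l4].
case: (ltP 0 (a i)) => ha'.
  have : t1 * a i < t2 * a i by rewrite ltr_pM2r.
  move=> hh; apply/andP; split; lra.
have a0 : a i = 0 by apply/eqP; rewrite eq_le ha' ha.
rewrite a0 !mulr0 !addr0 in e1 e2 e.
apply/andP; split; first lra.
rewrite lt_neqAle; apply/andP; split; last lra.
apply/negP => /eqP ee; apply: (NoZ a0 (m := m + 1)).
by rewrite -e ee intrD mulr1z.
Qed.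

Lemma upperB n : passes_n p q n -> n%:Z <= psi (E 1) - psi (E 0) + 1.
Proof.
move=> [s [us [sz Hs]]].
have hr : psi (E 0) <= psi (E 1).
  by case/andP: (@psi_range 1 (ltac:(by rewrite ler01 lexx))).
have [Jn eJ] : exists Jn : nat, psi (E 1) - psi (E 0) = Jn%:Z.
  by exists (absz (psi (E 1) - psi (E 0))%R); rewrite gez0_abs // subr_ge0.
rewrite eJ -sz.
set vs := [seq psi (E 0) + j%:Z | j <- iota 0 Jn.+1].
have : (size (map psi s) <= size vs)%N.
  apply: uniq_leq_size.
    rewrite map_inj_in_uniq // => x y hx hy.
    have [tx [_ ->]] := passed_E (proj1 (Hs x) hx).
    have [ty [_ ->]] := passed_E (proj1 (Hs y) hy).
    exact: E_inj.
  move=> v /mapP[k hk ->].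
  have [t [ht ->]] := passed_E (proj1 (Hs k) hk).
  have /andP[l1 l2] : psi (E 0) <= psi (E t) <= psi (E 1).
    by apply: psi_range; case/andP: ht => *; apply/andP; split; apply: ltW.
  apply/mapP; exists (absz (psi (E t) - psi (E 0))%R).
    rewrite mem_iota add0n /=; lia.
  rewrite gez0_abs ?subr_ge0 //; lia.
rewrite size_map size_map size_iota => h; lia.
Qed.



End Geo.

Lemma intrm1 (R : realType) : (-1 : int)%:~R = -1 :> R.
Proof. by []. Qed.

Lemma skel_two (R : realType) d (x : 'I_d -> R) i j (mi mj : int) :
  i != j -> x i = mi%:~R -> x j = mj%:~R -> skel x.
Proof.
move=> hij hi hj.
exists (~: [set i; j]),
  (fun l => if l == i then mi else if l == j then mj else Num.floor (x l)).
split.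
  have e := cardsC [set i; j]; rewrite cards2 hij card_ord /= in e.
  move: e; set c := #|~: [set i; j]|; move=> e; lia.
move=> l; rewrite !inE.
case: (eqVneq l i) => [->|hli] /=; first by rewrite hi.
case: (eqVneq l j) => [->|hlj] /=; first by rewrite hj.
apply/andP; split; first exact: floor_le.
by have := floorD1_gt (x l); rewrite intrD mulr1z => h; apply: ltW.
Qed.

Lemma u_int (R : realType) d (p q : 'I_d -> R) i t (m : int) :
  u p q i t = m%:~R -> segpt p q t i = (if sg p q i then m else - m)%:~R.
Proof. by rewrite /u; case: (sg p q i) => // e; rewrite intrN -e opprK. Qed.

Lemma NoTwo_of (R : realType) d (p q : 'I_d -> R) :
  (forall t : R, 0 < t < 1 -> ~ skel (segpt p q t)) ->
  forall t, 0 < t < 1 -> forall i j, i != j ->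
  forall mi mj : int, u p q i t = mi%:~R -> u p q j t = mj%:~R -> False.
Proof.
move=> H t ht i j hij mi mj /u_int hi /u_int hj.
exact: (H t ht (skel_two hij hi hj)).
Qed.

Lemma key (R : realType) d (i0 : 'I_d) (n : nat) g : @Diag R d n g ->
  exists IA kA IB kB, g = @gamma R d IA kA IB kB /\
    (forall i, -1 <= kA i <= 1) /\
    (\sum_i `|kB i| <= (2 * d)%:Z \/
     n%:Z - (3 * d)%:Z <= \sum_i `|kB i| <= n%:Z + (3 * d)%:Z).
Proof.
move=> [IA [kA [IB [kB [_ [_ [eg [[s gs] [cl ini]]]]]]]]].
exists IA, kA, IB, kB; split => //.
have pn := cl s; rewrite -eg in pn; have {pn} pn := pn gs.
have [eps [heps Hini]] := ini s gs.
have gs' := gs; rewrite eg in gs'.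
move: gs' => [pq [fA [fB nsk]]].
move: pn pq fA fB nsk Hini; case: s gs => p q /= _ pn pq fA fB nsk Hini.
have hp i : 0 <= p i <= 1.
  have := Hini 0 (ltac:(by rewrite lexx /=; apply: ltW)) i.
  by rewrite /segpt mul0r addr0.
split.
  move=> i; have := hp i; have := fA i; case: (i \in IA).
    move=> /andP[h1 h2] /andP[h3 h4]; apply/andP; split.
      by rewrite -(ler_int R) intrm1; lra.
    by rewrite -(ler_int R) mulr1z; lra.
  move=> /eqP -> /andP[h3 h4]; apply/andP; split.
    by rewrite -(ler_int R) intrm1; lra.
  by rewrite -(ler_int R) mulr1z; lra.
have hq i : (kB i)%:~R <= q i <= (kB i)%:~R + 1.
  have := fB i; case: (i \in IB) => // /eqP ->; apply/andP; split; lra.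
have hak i : a p q i - 1 <= (`|kB i|)%:~R <= a p q i + 1.
  have h1 := ler_dist_dist (dl p q i) (kB i)%:~R.
  have h2 : `|dl p q i - (kB i)%:~R| <= 1.
    rewrite ler_norml; have := hp i; have := hq i; rewrite /dl.
    move=> /andP[? ?] /andP[? ?]; apply/andP; split; lra.
  have := le_trans h1 h2; rewrite ler_norml intr_norm /a.
  move=> /andP[? ?]; apply/andP; split; lra.
set K := \sum_i `|kB i|.
have hK : \sum_i a p q i - d%:R <= K%:~R <= \sum_i a p q i + d%:R.
  rewrite /K mulrz_sumr; apply/andP; split.
    rewrite (_ : \sum_i a p q i - d%:R = \sum_i (a p q i - 1)); last first.
      by rewrite sumrB sumr_const card_ord.
    by apply: ler_sum => i _; case/andP: (hak i).
  rewrite (_ : \sum_i a p q i + d%:R = \sum_i (a p q i + 1)); last first.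
    by rewrite big_split /= sumr_const card_ord.
  by apply: ler_sum => i _; case/andP: (hak i).
have NT := NoTwo_of nsk.
case: (boolP [exists i, (a p q i == 0) &&
                 (u p q i 0 == (Num.floor (u p q i 0))%:~R)]).
  move=> /existsP[i1 /andP[/eqP ha1 /eqP hu1]].
  have hle := a_le1 NT ha1 hu1.
  have : \sum_i a p q i <= d%:R.
    rewrite -[d in d%:R]card_ord -sumr_const.
    by apply: ler_sum => i _; apply: hle.
  move=> hs; left; rewrite -(ler_int R) -pmulrn natrM; lra.
move=> hZ.
have NZ : forall i, a p q i = 0 -> forall m : int, u p q i 0 <> m%:~R.
  move=> i ha m hm; move/negP: hZ; apply; apply/existsP; exists i.
  by rewrite ha eqxx /= hm intrKfloor.
have lb := lowerB i0 NT pn.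
have ub := upperB NZ pn.
have db := @dpsi_bounds R d p q.
move: lb ub db; set D := psi p q (E p q 1) - psi p q (E p q 0).
move=> lb ub /andP[db1 db2]; clearbody D.
rewrite -(ler_int R) ?intrB ?intrD ?intrN -?pmulrn ?mulr1z in lb.
rewrite -(ler_int R) ?intrB ?intrD ?intrN -?pmulrn ?mulr1z in ub.
case/andP: hK => hK1 hK2.
have hd1 : 1 <= d%:R :> R.
  by rewrite ler1n; exact: leq_ltn_trans (leq0n _) (ltn_ord i0).
right; apply/andP; split; rewrite -(ler_int R) ?intrB ?intrD -!pmulrn natrM; lra.
Qed.

Lemma In_map (T : eqType) U (f : T -> U) (s : seq T) x :
  x \in s -> List.In (f x) (map f s).
Proof.
elim: s => [//|y s IH]; rewrite inE => /orP[/eqP ->|/IH h] /=; [left|right] => //.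
Qed.

Definition kAof d (v : {ffun 'I_d -> 'I_3}) (i : 'I_d) : int := (v i)%:Z - 1.
Definition hval d' M (h : {ffun 'I_d' -> 'I_(2 * M).+1}) (j : 'I_d') : int :=
  (h j)%:Z - M%:Z.
Definition kBof d' (n M : nat) (h : {ffun 'I_d'.+1 -> 'I_(2 * M).+1}) (b : bool)
  (w : 'I_(6 * d'.+2).+1) (sgn : bool) (i : 'I_d'.+2) : int :=
  match unlift ord_max i with
  | Some j => hval h j
  | None => let L := (if b then n%:Z - (3 * d'.+2)%:Z else 0) + w%:Z
                     - \sum_j `|hval h j| in if sgn then L else - L
  end.

Definition Par d' M := ({ffun 'I_d'.+2 -> bool} * {ffun 'I_d'.+2 -> 'I_3} *
  {ffun 'I_d'.+2 -> bool} * {ffun 'I_d'.+1 -> 'I_(2 * M).+1} * bool *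
  'I_(6 * d'.+2).+1 * bool)%type.

Definition Gfun (R : realType) d' n M (x : Par d' M) : seg R d'.+2 -> Prop :=
  let '(fA, v, fB, h, b, w, sgn) := x in
  gamma [set i | fA i] (kAof v) [set i | fB i] (kBof n h b w sgn).

Lemma term_le_sum d (f : 'I_d -> int) i : `|f i| <= \sum_j `|f j|.
Proof. by rewrite (bigD1 i) //= lerDl sumr_ge0. Qed.

Lemma Gfun_surj (R : realType) d' n (IA : {set 'I_d'.+2}) (kA : 'I_d'.+2 -> int)
  (IB : {set 'I_d'.+2}) (kB : 'I_d'.+2 -> int) :
  (forall i, -1 <= kA i <= 1) ->
  (\sum_i `|kB i| <= (2 * d'.+2)%:Z \/
   n%:Z - (3 * d'.+2)%:Z <= \sum_i `|kB i| <= n%:Z + (3 * d'.+2)%:Z) ->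
  exists x : Par d' (n + 3 * d'.+2), @Gfun R d' n _ x = @gamma R _ IA kA IB kB.
Proof.
set D := d'.+2; set M := (n + 3 * D)%N.
move=> hA hK; set K := \sum_i `|kB i| in hK.
have hKM : K <= M%:Z by case: hK => [|/andP[_]]; lia.
have hK0 : 0 <= K by apply: sumr_ge0.
set b := ~~ (K <= (2 * D)%:Z).
set base : int := if b then n%:Z - (3 * D)%:Z else 0.
have hw : 0 <= K - base <= (6 * D)%:Z.
  rewrite /base /b; case: hK => h; case: ifP => /=; lia.
exists ([ffun i => i \in IA], [ffun i => inord (absz (kA i + 1)) : 'I_3],
  [ffun i => i \in IB],
  [ffun j => inord (absz (kB (lift ord_max j) + M%:Z)) : 'I_(2 * M).+1],
  b, inord (absz (K - base)) : 'I_(6 * D).+1, 0 <= kB ord_max) => /=.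
have e1 : forall I : {set 'I_D}, [set i | [ffun i => i \in I] i] = I.
  by move=> I; apply/setP => i; rewrite inE ffunE.
rewrite !e1; congr (gamma _ _ _ _).
  apply: functional_extensionality => i; rewrite /kAof ffunE inordK.
    by have := hA i; move=> h; rewrite gez0_abs; lia.
  have := hA i; move=> h; lia.
have hb j : `|kB j| <= M%:Z by apply: le_trans hKM; apply: term_le_sum.
have hh j : hval [ffun j => inord (absz (kB (lift ord_max j) + M%:Z)) : 'I_(2 * M).+1] j
            = kB (lift ord_max j).
  rewrite /hval ffunE inordK.
    by have := hb (lift ord_max j); move=> h; rewrite gez0_abs; lia.
  have := hb (lift ord_max j); move=> h; lia.
apply: functional_extensionality => i; rewrite /kBof.
case: unliftP => [j ->|->]; first exact: hh.
rewrite (eq_bigr (fun j => `|kB (lift ord_max j)|)); last by move=> j _; rewrite hh.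
have eK : K = \sum_(j < d'.+1) `|kB (lift ord_max j)| + `|kB ord_max|.
  rewrite /K big_ord_recr /=; congr (_ + _); apply: eq_bigr => j _.
  by congr (`|kB _|); apply: val_inj; rewrite /= /bump leqNgt ltn_ord.
rewrite inordK; last by lia.
rewrite gez0_abs; last by lia.
rewrite -/base.
have -> : base + (K - base) - \sum_(j < d'.+1) `|kB (lift ord_max j)| = `|kB ord_max|.
  by rewrite eK; ring.
by case: (leP 0 (kB ord_max)) => h; [rewrite ger0_norm | rewrite ltr0_norm ?opprK].
Qed.

Lemma size_bound (D d1 n M : nat) : (0 < n)%N -> M = (n + 3 * D)%N ->
  (2 ^ D * 3 ^ D * 2 ^ D * (2 * M).+1 ^ d1 * 2 * (6 * D).+1 * 2 <=
   (2 ^ D * 3 ^ D * 2 ^ D * 2 * (6 * D).+1 * 2 * (6 * D + 3) ^ d1) * n ^ d1)%N.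
Proof.
move=> hn eM.
have h1 : ((2 * M).+1 ^ d1 <= ((6 * D + 3) * n) ^ d1)%N.
  case: d1 => [//|d1]; rewrite leq_exp2r // eM; nia.
rewrite expnMn in h1.
set c1 := ((6 * D + 3) ^ d1)%N in h1 *.
set X := ((2 * M).+1 ^ d1)%N in h1 *.
set Y := (n ^ d1)%N in h1 *.
set a1 := (2 ^ D)%N; set a2 := (3 ^ D)%N; set b := (6 * D).+1.
rewrite (_ : (a1 * a2 * a1 * 2 * b * 2 * c1 * Y = (a1 * a2 * a1 * 2 * b * 2) * (c1 * Y))%N);
  last by ring.
rewrite (_ : (a1 * a2 * a1 * X * 2 * b * 2 = (a1 * a2 * a1 * 2 * b * 2) * X)%N);
  last by ring.
exact: leq_mul.
Qed.

Lemma card_Par d' M : #|{: Par d' M}| =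
  (2 ^ d'.+2 * 3 ^ d'.+2 * 2 ^ d'.+2 * (2 * M).+1 ^ d'.+1 * 2 * (6 * d'.+2).+1 * 2)%N.
Proof. by rewrite /Par !card_prod !card_ffun !card_bool !card_ord. Qed.

Unset Implicit Arguments.

Theorem mainTheorem13 (R : realType) (d : nat) (hd : (2 <= d)%N) :
  exists C : R, 0 < C /\
    forall n : nat, (1 <= n)%N ->
      exists l : seq (seg R d -> Prop),
        (size l)%:R <= C * n%:R ^+ (d - 1) /\
        forall g, @Diag R d n g -> List.In g l.
Proof.
case: d hd => [|[|d']] // hd.
set D := d'.+2.
set c0 := (2 ^ D * 3 ^ D * 2 ^ D * 2 * (6 * D).+1 * 2)%N.
exists (c0 * (6 * D + 3) ^ d'.+1)%:R; split.
  rewrite ltr0n /c0; clearbody D.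
  have h2 : (0 < 2 ^ D)%N by rewrite expn_gt0.
  have h3 : (0 < 3 ^ D)%N by rewrite expn_gt0.
  have h6 : (0 < (6 * D + 3) ^ d'.+1)%N by rewrite expn_gt0 addn3.
  by rewrite !muln_gt0 h2 h3 h6.
move=> n hn.
set M := (n + 3 * D)%N.
exists (map (@Gfun R d' n M) (enum {: Par d' M})); split.
  rewrite size_map -cardE card_Par -natrX -natrM ler_nat subSS subn0.
  exact: size_bound.
move=> g hg.
have i0 : 'I_D := ord0.
have [IA [kA [IB [kB [-> [hA hK]]]]]] := key i0 hg.
have [x ex] := Gfun_surj R IA IB hA hK.
rewrite -ex; apply: In_map; exact: mem_enum.
Qed.
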